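(* Let $\Omega\subset\mathbb{C}$ be a simply connected domain, $(g,\mathcal{P},\mathcal{Q})$ a Weierstrass data of the first kind on $\Omega$, and $\lambda\in\mathbb{R}$ with $1+i\lambda g(z)\neq0$ for all $z\in\Omega$. Let $g_\lambda:=\frac{g}{1+i\lambda g}$, $\mathcal{P}_\lambda:=\mathcal{P}$, and let $\mathcal{Q}_\lambda:\Omega\to\mathbb{R}$ be a $\mathcal{C}^2$ function with $(\mathcal{Q}_\lambda)_z=\left(\frac1g+i\lambda\right)(g\mathcal{Q}_z-i\lambda\mathcal{P}_z)$ (so that $(g_\lambda,\mathcal{P}_\lambda,\mathcal{Q}_\lambda)$ is again a Weierstrass data of the first kind). Then $$\mathbf{X}_{[g_\lambda,\mathcal{P}_\lambda,\mathcal{Q}_\lambda]}=L_\lambda\,\mathbf{X}_{[g,\mathcal{P},\mathcal{Q}]}$$ up to an additive constant vector, where $L_\lambda$ is the linear map of $\mathbb{L}^4$ with matrix $$L_\lambda=\begin{bmatrix}1&0&0&0\\0&1&-\lambda&-\lambda\\0&\lambda&1-\frac{\lambda^2}{2}&-\frac{\lambda^2}{2}\\0&-\lambda&\frac{\lambda^2}{2}&1+\frac{\lambda^2}{2}\end{bmatrix}.$$ In particular the two marginally trapped surfaces are congruent in $\mathbb{L}^4$.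
   Context: $\Omega\subset\mathbb{R}^2\equiv\mathbb{C}$ has complex coordinate $z=u+iv$, and $\partial_z=\frac12(\partial_u-i\partial_v)$, $\partial_{\overline z}=\frac12(\partial_u+i\partial_v)$; subscripts denote partial derivatives. $\mathbb{L}^4$ is $\mathbb{R}^4$ with the Lorentzian metric $\langle x,y\rangle=x_1y_1+x_2y_2+x_3y_3-x_4y_4$. A Weierstrass data of the first kind on $\Omega$ is a triple $(g,\mathcal{P},\mathcal{Q})$ where $g:\Omega\to\mathbb{C}\setminus\{0\}$ and $\mathcal{P},\mathcal{Q}:\Omega\to\mathbb{R}$ are $\mathcal{C}^2$, satisfying $g_{\overline z}=0$, $\mathcal{P}_{z\overline z}=|g|^2\mathcal{Q}_{z\overline z}$, and $\mathcal{P}_z-|g|^2\mathcal{Q}_z\neq0$ at every point of $\Omega$. For such data, $\mathbf{X}_{[g,\mathcal{P},\mathcal{Q}]}:\Omega\to\mathbb{R}^4$ denotes any map (determined up to an additive constant vector) with $\mathbf{X}_z=\mathcal{P}_z\,(1/g,\ i/g,\ 1,\ 1)^T+\mathcal{Q}_z\,(g,\ -ig,\ -1,\ 1)^T$; it is a conformal parameterization of a marginally trapped surface in $\mathbb{L}^4$. *)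

(* Defs.v *)
From Stdlib Require Import Reals Lra.
From Coquelicot Require Import Coquelicot.
Open Scope R_scope.

(** Points of Omega ⊂ R^2 ≡ C are z = (u, v) : C = R * R. *)

Definition du (f : C -> R) (z : C) : R := Derive (fun t => f (t, snd z)) (fst z).
Definition dv (f : C -> R) (z : C) : R := Derive (fun t => f (fst z, t)) (snd z).

Definition C1_on (Om : C -> Prop) (f : C -> R) : Prop :=
  forall z, Om z ->
    ex_derive (fun t => f (t, snd z)) (fst z) /\
    ex_derive (fun t => f (fst z, t)) (snd z) /\
    continuous (du f) z /\ continuous (dv f) z.

Definition C2_on (Om : C -> Prop) (f : C -> R) : Prop :=
  C1_on Om f /\ C1_on Om (du f) /\ C1_on Om (dv f).

Definition C2c_on (Om : C -> Prop) (F : C -> C) : Prop :=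
  C2_on Om (fun w => Re (F w)) /\ C2_on Om (fun w => Im (F w)).

Definition duC (F : C -> C) (z : C) : C :=
  (du (fun w => Re (F w)) z, du (fun w => Im (F w)) z).
Definition dvC (F : C -> C) (z : C) : C :=
  (dv (fun w => Re (F w)) z, dv (fun w => Im (F w)) z).

Definition dz (F : C -> C) (z : C) : C := (/ 2 * (duC F z - Ci * dvC F z))%C.
Definition dzbar (F : C -> C) (z : C) : C := (/ 2 * (duC F z + Ci * dvC F z))%C.

Definition cplx (f : C -> R) : C -> C := fun w => RtoC (f w).
Definition dzR (f : C -> R) : C -> C := dz (cplx f).

Definition dzzbarR (f : C -> R) : C -> C := dzbar (dzR f).

Definition WData1 (Om : C -> Prop) (g : C -> C) (P Q : C -> R) : Prop :=
  C2c_on Om g /\ C2_on Om P /\ C2_on Om Q /\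
  (forall z, Om z -> g z <> 0%C) /\
  (forall z, Om z -> dzbar g z = 0%C) /\
  (forall z, Om z -> dzzbarR P z = (RtoC (Cmod (g z) ^ 2) * dzzbarR Q z)%C) /\
  (forall z, Om z -> (dzR P z - RtoC (Cmod (g z) ^ 2) * dzR Q z)%C <> 0%C).

(** Maps Omega -> R^4 are represented as X : nat -> C -> R, the coordinates
    being X 0, X 1, X 2, X 3 (other indices are irrelevant). *)

Definition wP (w : C) (i : nat) : C :=
  match i with
  | 0%nat => (/ w)%C | 1%nat => (Ci / w)%C | 2%nat => 1%C | _ => 1%C
  end.
Definition wQ (w : C) (i : nat) : C :=
  match i with
  | 0%nat => w | 1%nat => (- (Ci * w))%C | 2%nat => (- 1)%C | _ => 1%C
  end.

(** X is a (choice of) X_{[g,P,Q]} on Omega: a C^1 map with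
    X_z = P_z (1/g, i/g, 1, 1)^T + Q_z (g, -ig, -1, 1)^T. *)
Definition IsXmap (Om : C -> Prop) (g : C -> C) (P Q : C -> R)
    (X : nat -> C -> R) : Prop :=
  (forall i, (i < 4)%nat -> C1_on Om (X i)) /\
  (forall z i, Om z -> (i < 4)%nat ->
     dzR (X i) z = (dzR P z * wP (g z) i + dzR Q z * wQ (g z) i)%C).

Definition path_in (Om : C -> Prop) (gam : R -> C) : Prop :=
  forall t, 0 <= t <= 1 -> continuous gam t /\ Om (gam t).

Definition path_connected (Om : C -> Prop) : Prop :=
  forall a b, Om a -> Om b ->
    exists gam, path_in Om gam /\ gam 0 = a /\ gam 1 = b.

Definition loops_contractible (Om : C -> Prop) : Prop :=
  forall gam, path_in Om gam -> gam 0 = gam 1 ->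
    exists H : R -> R -> C,
      (forall s t, 0 <= s <= 1 -> 0 <= t <= 1 ->
         continuous (fun p : R * R => H (fst p) (snd p)) (s, t) /\ Om (H s t)) /\
      (forall t, 0 <= t <= 1 -> H 0 t = gam t /\ H 1 t = gam 0) /\
      (forall s, 0 <= s <= 1 -> H s 0 = gam 0 /\ H s 1 = gam 0).

Definition simply_connected_domain (Om : C -> Prop) : Prop :=
  open Om /\ (exists z, Om z) /\ path_connected Om /\ loops_contractible Om.

Definition Lmat (lam : R) (i j : nat) : R :=
  match i, j with
  | O, O => 1 | O, _ => 0
  | S O, O => 0 | S O, S O => 1 | S O, _ => - lam
  | S (S O), O => 0 | S (S O), S O => lam
  | S (S O), S (S O) => 1 - lam ^ 2 / 2 | S (S O), _ => - (lam ^ 2 / 2)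
  | _, O => 0 | _, S O => - lam | _, S (S O) => lam ^ 2 / 2
  | _, _ => 1 + lam ^ 2 / 2
  end.

Definition eta (i j : nat) : R :=
  if Nat.eqb i j then (if Nat.eqb i 3 then -1 else 1) else 0.

Definition applyL (lam : R) (X : nat -> C -> R) (i : nat) (z : C) : R :=
  sum_f_R0 (fun j => Lmat lam i j * X j z) 3.

(* Main.v *)
Require Import Defs.
From Stdlib Require Import Reals Lra Lia FunctionalExtensionality Classical.
From Coquelicot Require Import Coquelicot.
Open Scope R_scope.

Definition lin (d:bool) (z:C) (t:R) : C := if d then (t, snd z) else (fst z, t).
Definition bp (d:bool) (z:C) : R := if d then fst z else snd z.
Definition Dd d (f:C->R) z := Derive (fun t => f (lin d z t)) (bp d z).
Definition ED d (f:C->R) z := ex_derive (fun t => f (lin d z t)) (bp d z).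

Lemma lin_bp d z : lin d z (bp d z) = z.
Proof. destruct d, z; reflexivity. Qed.
Lemma lin_lin d z t s : lin d (lin d z t) s = lin d z s.
Proof. destruct d; reflexivity. Qed.
Lemma bp_lin d z t : bp d (lin d z t) = t.
Proof. destruct d; reflexivity. Qed.

Lemma ballC (x y : C) (e : R) : ball x e y <-> (Rabs (fst y - fst x) < e /\ Rabs (snd y - snd x) < e).
Proof. destruct x, y. simpl. reflexivity. Qed.
Lemma ballR (x y : R) (e : R) : ball x e y <-> Rabs (y - x) < e.
Proof. reflexivity. Qed.

Lemma loc_loc (P : C -> Prop) z d : locally z P -> locally (bp d z) (fun t => P (lin d z t)).
Proof.
  intros [e He]. exists e. intros t Ht. apply He. apply ballC.
  apply ballR in Ht. destruct d, z; simpl in *;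
  rewrite Rminus_diag, Rabs_R0; split; try exact Ht; try apply cond_pos.
Qed.

Lemma open_loc Om z d : open Om -> Om z -> locally (bp d z) (fun t => Om (lin d z t)).
Proof. intros HO Hz. apply loc_loc. apply HO, Hz. Qed.

Lemma C1_iff Om f : C1_on Om f <-> forall z, Om z -> forall d, ED d f z /\ continuous (Dd d f) z.
Proof.
  split.
  - intros H z Hz d. destruct (H z Hz) as (H1&H2&H3&H4). destruct d; split; assumption.
  - intros H z Hz. destruct (H z Hz true), (H z Hz false). repeat split; assumption.
Qed.

Lemma C2_iff Om f : C2_on Om f <-> C1_on Om f /\ forall d, C1_on Om (Dd d f).
Proof.
  split.
  - intros (H1&H2&H3). split; [assumption|]. intros []; assumption.
  - intros (H1&H2). split; [|split]; [assumption|apply (H2 true)|apply (H2 false)].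
Qed.

Lemma ED_at Om f d z t : C1_on Om f -> Om (lin d z t) ->
  ex_derive (fun s => f (lin d z s)) t /\ Derive (fun s => f (lin d z s)) t = Dd d f (lin d z t).
Proof.
  intros H Ht. destruct (proj1 (C1_iff Om f) H _ Ht d) as [H1 _].
  unfold ED, Dd in *. rewrite bp_lin in *.
  assert (E : (fun s => f (lin d (lin d z t) s)) = (fun s => f (lin d z s))).
  { apply functional_extensionality; intro; rewrite lin_lin; reflexivity. }
  rewrite E. split; [|reflexivity].
  eapply ex_derive_ext; [|exact H1]. intro s; simpl; rewrite lin_lin; reflexivity.
Qed.

Lemma mvt_line Om f d z a b : C1_on Om f ->
  (forall t, Rmin a b <= t <= Rmax a b -> Om (lin d z t)) ->
  exists c, Rmin a b <= c <= Rmax a b /\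
    f (lin d z b) - f (lin d z a) = Dd d f (lin d z c) * (b - a).
Proof.
  intros H Hin.
  apply (MVT_gen (fun s => f (lin d z s)) a b (fun c => Dd d f (lin d z c))).
  - intros x Hx. destruct (ED_at Om f d z x H) as [E1 E2]. apply Hin; lra.
    rewrite <- E2. apply Derive_correct, E1.
  - intros x Hx. destruct (ED_at Om f d z x H) as [E1 E2]. apply Hin; lra.
    apply continuity_pt_filterlim. apply (ex_derive_continuous (K:=R_AbsRing) (V:=R_NormedModule)). exact E1.
Qed.

Lemma between_abs a b t : Rmin a b <= t <= Rmax a b -> Rabs (t - a) <= Rabs (b - a).
Proof. unfold Rmin, Rmax; destruct (Rle_dec a b); intros; split_Rabs; lra. Qed.

Lemma C1_cont Om f z : open Om -> C1_on Om f -> Om z -> continuous f z.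
Proof.
  intros HO H Hz.
  destruct (proj1 (C1_iff Om f) H z Hz true) as [_ Hc1].
  destruct (proj1 (C1_iff Om f) H z Hz false) as [He2 _].
  apply filterlim_locally. intros eps.
  destruct (HO z Hz) as [r Hr].
  destruct (proj1 (filterlim_locally _ _) Hc1 (mkposreal 1 Rlt_0_1)) as [r1 Hr1].
  pose proof (ex_derive_continuous _ _ He2) as Hc2.
  destruct (proj1 (filterlim_locally _ _) Hc2 (pos_div_2 eps)) as [r2 Hr2].
  set (M := Rabs (Dd true f z) + 1).
  assert (HM : 0 < M) by (unfold M; pose proof (Rabs_pos (Dd true f z)); lra).
  assert (Hd : 0 < Rmin (Rmin r r1) (Rmin r2 (eps / (2 * M)))).
  { pose proof (cond_pos r); pose proof (cond_pos r1); pose proof (cond_pos r2); pose proof (cond_pos eps).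
    repeat apply Rmin_pos; try assumption. apply Rdiv_lt_0_compat; lra. }
  exists (mkposreal _ Hd). intros w Hw. apply ballC in Hw. cbn [pos] in Hw.
  destruct z as [u v], w as [u' v']. cbn [fst snd] in *.
  assert (Hmin1 := Rmin_l (Rmin r r1) (Rmin r2 (eps / (2 * M)))).
  assert (Hmin2 := Rmin_r (Rmin r r1) (Rmin r2 (eps / (2 * M)))).
  assert (Hr' := Rmin_l r r1). assert (Hr1' := Rmin_r r r1).
  assert (Hr2' := Rmin_l r2 (eps / (2 * M))). assert (He' := Rmin_r r2 (eps / (2 * M))).
  destruct Hw as [Hw1 Hw2].
  change (Rabs (u' - u) < Rmin (Rmin r r1) (Rmin r2 (eps / (2 * M)))) in Hw1.
  change (Rabs (v' - v) < Rmin (Rmin r r1) (Rmin r2 (eps / (2 * M)))) in Hw2.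
  destruct (mvt_line Om f true (u', v') u u' H) as (c & Hc & Eq).
  { intros t Ht. apply Hr. apply ballC. cbn [fst snd lin]. pose proof (between_abs u u' t Ht). cbn [fst snd]. split; lra. }
  simpl in Eq.
  assert (Hb : Rabs (Dd true f (c, v')) < M).
  { assert (B : ball (Dd true f (u, v)) 1 (Dd true f (c, v'))).
    { apply Hr1. apply ballC. cbn [fst snd]. pose proof (between_abs u u' c Hc). split; lra. }
    change (Rabs (Dd true f (c,v') - Dd true f (u,v)) < 1) in B. unfold M. split_Rabs; lra. }
  assert (B2 : ball (f (u, v)) (eps/2) (f (u, v'))).
  { apply (Hr2 v'). change (Rabs (v' - v) < r2). lra. }
  change (Rabs (f (u, v') - f (u, v)) < eps / 2) in B2. change (Rabs (f (u', v') - f (u, v)) < eps).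
  assert (K : Rabs (f (u', v') - f (u, v')) <= eps / 2).
  { rewrite Eq, Rabs_mult.
    apply Rle_trans with (M * Rabs (u' - u)).
    - apply Rmult_le_compat_r; [apply Rabs_pos|lra].
    - apply Rle_trans with (M * (eps / (2 * M))).
      + apply Rmult_le_compat_l; lra.
      + right. field. lra. }
  replace (f (u', v') - f (u, v)) with ((f (u', v') - f (u, v')) + (f (u, v') - f (u, v))) by ring.
  eapply Rle_lt_trans; [apply Rabs_triang|]. lra.
Qed.

Section Pt.
Variables (d : bool) (f g : C -> R) (w : C).
Lemma ED_plus : ED d f w -> ED d g w -> ED d (fun x => f x + g x) w.
Proof. unfold ED; intros; apply (ex_derive_plus (fun t => f (lin d w t)) (fun t => g (lin d w t))); assumption. Qed.
Lemma Dd_plus : ED d f w -> ED d g w -> Dd d (fun x => f x + g x) w = Dd d f w + Dd d g w.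
Proof. unfold ED, Dd; intros; apply (Derive_plus (fun t => f (lin d w t)) (fun t => g (lin d w t))); assumption. Qed.
Lemma ED_mult : ED d f w -> ED d g w -> ED d (fun x => f x * g x) w.
Proof. unfold ED; intros; apply (ex_derive_mult (fun t => f (lin d w t)) (fun t => g (lin d w t))); assumption. Qed.
Lemma Dd_mult : ED d f w -> ED d g w -> Dd d (fun x => f x * g x) w = Dd d f w * g w + f w * Dd d g w.
Proof. unfold ED, Dd; intros. rewrite (Derive_mult (fun t => f (lin d w t)) (fun t => g (lin d w t))) by assumption.
  rewrite lin_bp. reflexivity. Qed.
Lemma ED_opp : ED d f w -> ED d (fun x => - f x) w.
Proof. unfold ED; intros; apply (ex_derive_opp (fun t => f (lin d w t))); assumption. Qed.
Lemma Dd_opp : Dd d (fun x => - f x) w = - Dd d f w.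
Proof. unfold Dd; apply (Derive_opp (fun t => f (lin d w t))). Qed.
Lemma ED_inv : ED d f w -> f w <> 0 -> ED d (fun x => / f x) w.
Proof. unfold ED; intros; apply (ex_derive_inv (fun t => f (lin d w t))); [assumption|rewrite lin_bp; assumption]. Qed.
Lemma Dd_inv : ED d f w -> f w <> 0 -> Dd d (fun x => / f x) w = - Dd d f w / (f w)^2.
Proof. unfold ED, Dd; intros. rewrite (Derive_inv (fun t => f (lin d w t))); [rewrite lin_bp; reflexivity|assumption|rewrite lin_bp; assumption]. Qed.
End Pt.
Lemma ED_const d c w : ED d (fun _ => c) w.
Proof. unfold ED; apply ex_derive_const. Qed.
Lemma Dd_const d c w : Dd d (fun _ => c) w = 0.
Proof. unfold Dd; apply Derive_const. Qed.

Lemma cont_plus (f g : C -> R) z : continuous f z -> continuous g z -> continuous (fun x => f x + g x) z.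
Proof. intros; apply (continuous_plus (K:=R_AbsRing) (V:=R_NormedModule) f g z); assumption. Qed.
Lemma cont_mult (f g : C -> R) z : continuous f z -> continuous g z -> continuous (fun x => f x * g x) z.
Proof. intros; apply (continuous_mult (K:=R_AbsRing) f g z); assumption. Qed.
Lemma cont_opp (f : C -> R) z : continuous f z -> continuous (fun x => - f x) z.
Proof. intros; apply (continuous_opp (K:=R_AbsRing) (V:=R_NormedModule) f z); assumption. Qed.
Lemma cont_inv (f : C -> R) z : continuous f z -> f z <> 0 -> continuous (fun x => / f x) z.
Proof. intros; apply (continuous_comp f (fun y => / y) z); [assumption|apply continuous_Rinv; assumption]. Qed.

Lemma loc_open Om z (P : C -> Prop) : open Om -> Om z -> (forall y, Om y -> P y) -> locally z P.
Proof. intros HO Hz HP. eapply filter_imp; [exact HP|]. apply HO, Hz. Qed.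

Ltac getC1 H z Hz d := let a := fresh "E" in let b := fresh "K" in
  destruct (proj1 (C1_iff _ _) H z Hz d) as [a b].

Section C1cl.
Variables (Om : C -> Prop) (HO : open Om).

Lemma C1_plus f g : C1_on Om f -> C1_on Om g -> C1_on Om (fun x => f x + g x).
Proof.
  intros Hf Hg. apply C1_iff. intros z Hz d. getC1 Hf z Hz d. getC1 Hg z Hz d.
  split; [apply ED_plus; assumption|].
  apply (continuous_ext_loc _ (fun y => Dd d f y + Dd d g y)).
  - apply (loc_open Om z); [assumption|assumption|]. intros y Hy.
    getC1 Hf y Hy d. getC1 Hg y Hy d. symmetry; apply Dd_plus; assumption.
  - apply cont_plus; assumption.
Qed.

Lemma C1_mult f g : C1_on Om f -> C1_on Om g -> C1_on Om (fun x => f x * g x).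
Proof.
  intros Hf Hg. apply C1_iff. intros z Hz d. getC1 Hf z Hz d. getC1 Hg z Hz d.
  split; [apply ED_mult; assumption|].
  apply (continuous_ext_loc _ (fun y => Dd d f y * g y + f y * Dd d g y)).
  - apply (loc_open Om z); [assumption|assumption|]. intros y Hy.
    getC1 Hf y Hy d. getC1 Hg y Hy d. symmetry; apply Dd_mult; assumption.
  - apply cont_plus; apply cont_mult; try assumption; apply (C1_cont Om); assumption.
Qed.

Lemma C1_opp f : C1_on Om f -> C1_on Om (fun x => - f x).
Proof.
  intros Hf. apply C1_iff. intros z Hz d. getC1 Hf z Hz d.
  split; [apply ED_opp; assumption|].
  apply (continuous_ext_loc _ (fun y => - Dd d f y)).
  - apply (loc_open Om z); [assumption|assumption|]. intros y Hy. symmetry; apply Dd_opp.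
  - apply cont_opp; assumption.
Qed.

Lemma C1_const c : C1_on Om (fun _ => c).
Proof.
  apply C1_iff. intros z Hz d. split; [apply ED_const|].
  apply (continuous_ext (fun _ => 0)). intro; symmetry; apply Dd_const. apply continuous_const.
Qed.

Lemma C1_inv f : C1_on Om f -> (forall w, Om w -> f w <> 0) -> C1_on Om (fun x => / f x).
Proof.
  intros Hf Hn. apply C1_iff. intros z Hz d. getC1 Hf z Hz d.
  split; [apply ED_inv; auto|].
  apply (continuous_ext_loc _ (fun y => - Dd d f y * / (f y * f y))).
  - apply (loc_open Om z); [assumption|assumption|]. intros y Hy.
    getC1 Hf y Hy d. rewrite Dd_inv by auto. unfold Rdiv. simpl. rewrite Rmult_1_r. reflexivity.
  - apply cont_mult. apply cont_opp; assumption. apply cont_inv.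
    apply cont_mult; apply (C1_cont Om); assumption.
    specialize (Hn z Hz). intro Heq. apply Rmult_integral in Heq. tauto.
Qed.

Lemma C1_ext f g : (forall w, Om w -> f w = g w) -> C1_on Om g -> C1_on Om f.
Proof.
  intros He Hg. apply C1_iff. intros z Hz d. getC1 Hg z Hz d.
  assert (L : forall y, Om y -> locally (bp d y) (fun t => g (lin d y t) = f (lin d y t))).
  { intros y Hy. apply (loc_loc (fun w => g w = f w)). apply (loc_open Om y); auto. intros; symmetry; auto. }
  split.
  - unfold ED. apply (ex_derive_ext_loc (fun t => g (lin d z t))); auto.
  - apply (continuous_ext_loc _ (Dd d g)); [|assumption].
    apply (loc_open Om z); auto. intros y Hy. unfold Dd. apply Derive_ext_loc. auto.
Qed.

Lemma Dd_ext f g d w : (forall y, Om y -> f y = g y) -> Om w -> Dd d f w = Dd d g w.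
Proof.
  intros He Hw. unfold Dd. apply Derive_ext_loc. apply (loc_loc (fun y => f y = g y)). apply (loc_open Om w); auto.
Qed.
End C1cl.



Section C2cl.
Variables (Om : C -> Prop) (HO : open Om).

Lemma C2_C1 f : C2_on Om f -> C1_on Om f.
Proof. intros H; exact (proj1 H). Qed.
Lemma C2_D f d : C2_on Om f -> C1_on Om (Dd d f).
Proof. intros H; exact (proj2 (proj1 (C2_iff Om f) H) d). Qed.

Lemma C2_plus f g : C2_on Om f -> C2_on Om g -> C2_on Om (fun x => f x + g x).
Proof.
  intros Hf Hg. apply (proj2 (C2_iff _ _)). split; [apply C1_plus; auto using C2_C1|]. intro d.
  apply (C1_ext Om HO _ (fun w => Dd d f w + Dd d g w)).
  - intros w Hw. pose proof (C2_C1 f Hf) as F. pose proof (C2_C1 g Hg) as G.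
    getC1 F w Hw d. getC1 G w Hw d. apply Dd_plus; auto.
  - apply C1_plus; auto using C2_D.
Qed.

Lemma C2_mult f g : C2_on Om f -> C2_on Om g -> C2_on Om (fun x => f x * g x).
Proof.
  intros Hf Hg. apply (proj2 (C2_iff _ _)). split; [apply C1_mult; auto using C2_C1|]. intro d.
  apply (C1_ext Om HO _ (fun w => Dd d f w * g w + f w * Dd d g w)).
  - intros w Hw. pose proof (C2_C1 f Hf) as F. pose proof (C2_C1 g Hg) as G.
    getC1 F w Hw d. getC1 G w Hw d. apply Dd_mult; auto.
  - apply C1_plus; auto; apply C1_mult; auto using C2_D, C2_C1.
Qed.

Lemma C2_opp f : C2_on Om f -> C2_on Om (fun x => - f x).
Proof.
  intros Hf. apply (proj2 (C2_iff _ _)). split; [apply C1_opp; auto using C2_C1|]. intro d.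
  apply (C1_ext Om HO _ (fun w => - Dd d f w)).
  - intros w Hw. apply Dd_opp.
  - apply C1_opp; auto using C2_D.
Qed.

Lemma C2_const c : C2_on Om (fun _ => c).
Proof.
  apply (proj2 (C2_iff _ _)). split; [apply C1_const; auto|]. intro d.
  apply (C1_ext Om HO _ (fun w => 0)).
  - intros w Hw. apply Dd_const.
  - apply C1_const; auto.
Qed.

Lemma C2_inv f : C2_on Om f -> (forall w, Om w -> f w <> 0) -> C2_on Om (fun x => / f x).
Proof.
  intros Hf Hn. apply (proj2 (C2_iff _ _)). split; [apply C1_inv; auto using C2_C1|]. intro d.
  apply (C1_ext Om HO _ (fun w => - (Dd d f w * (/ f w * / f w)))).
  - intros w Hw. pose proof (C2_C1 f Hf) as F. getC1 F w Hw d.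
    rewrite Dd_inv by auto. field. auto.
  - apply C1_opp; auto. apply C1_mult; auto using C2_D. apply C1_mult; auto; apply C1_inv; auto using C2_C1.
Qed.

Lemma C2_ext f g : (forall w, f w = g w) -> C2_on Om g -> C2_on Om f.
Proof. intros E H. replace f with g; auto. apply functional_extensionality; intro; auto. Qed.

Lemma C2c_plus (F G : C -> C) : C2c_on Om F -> C2c_on Om G -> C2c_on Om (fun x => (F x + G x)%C).
Proof.
  intros [F1 F2] [G1 G2]. split.
  - apply (C2_ext _ (fun x => Re (F x) + Re (G x))); [reflexivity|]. apply C2_plus; auto.
  - apply (C2_ext _ (fun x => Im (F x) + Im (G x))); [reflexivity|]. apply C2_plus; auto.
Qed.

Lemma C2c_mult (F G : C -> C) : C2c_on Om F -> C2c_on Om G -> C2c_on Om (fun x => (F x * G x)%C).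
Proof.
  intros [F1 F2] [G1 G2]. split.
  - apply (C2_ext _ (fun x => Re (F x) * Re (G x) + - (Im (F x) * Im (G x)))); [reflexivity|].
    apply C2_plus; [|apply C2_opp]; apply C2_mult; auto.
  - apply (C2_ext _ (fun x => Re (F x) * Im (G x) + Im (F x) * Re (G x))); [reflexivity|].
    apply C2_plus; apply C2_mult; auto.
Qed.

Lemma C2c_const (c : C) : C2c_on Om (fun _ => c).
Proof. split; apply C2_const. Qed.

Lemma Cnz_norm (x : C) : x <> 0%C -> Re x * Re x + Im x * Im x <> 0.
Proof.
  intros H E. apply H. destruct x as [a b]. simpl in E.
  assert (a = 0) by nra. assert (b = 0) by nra. subst. reflexivity.
Qed.

Lemma C2c_inv (F : C -> C) : C2c_on Om F -> (forall w, Om w -> F w <> 0%C) -> C2c_on Om (fun x => (/ F x)%C).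
Proof.
  intros [F1 F2] Hn.
  assert (N : C2_on Om (fun x => / (Re (F x) * Re (F x) + Im (F x) * Im (F x)))).
  { apply C2_inv; [apply C2_plus; apply C2_mult; auto|]. intros; apply Cnz_norm; auto. }
  split.
  - apply (C2_ext _ (fun x => Re (F x) * / (Re (F x) * Re (F x) + Im (F x) * Im (F x)))).
    { intro w. unfold Cinv. simpl. unfold Rdiv. rewrite !Rmult_1_r. reflexivity. }
    apply C2_mult; auto.
  - apply (C2_ext _ (fun x => - Im (F x) * / (Re (F x) * Re (F x) + Im (F x) * Im (F x)))).
    { intro w. unfold Cinv. simpl. unfold Rdiv. rewrite !Rmult_1_r. reflexivity. }
    apply C2_mult; auto. apply C2_opp; auto.
Qed.
End C2cl.

Definition EDc d (F : C -> C) z := ED d (fun w => Re (F w)) z /\ ED d (fun w => Im (F w)) z.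
Definition DdC d (F : C -> C) z : C := (Dd d (fun w => Re (F w)) z, Dd d (fun w => Im (F w)) z).

Lemma dzbar_DdC F z : dzbar F z = (/2 * (DdC true F z + Ci * DdC false F z))%C.
Proof. reflexivity. Qed.

Lemma Dd_fext d f g w : (forall x, f x = g x) -> Dd d f w = Dd d g w.
Proof. intros H. replace f with g; auto. apply functional_extensionality; intro; auto. Qed.
Lemma ED_fext d f g w : (forall x, f x = g x) -> ED d g w -> ED d f w.
Proof. intros H. replace f with g; auto. apply functional_extensionality; intro; auto. Qed.

Section Pt.
Variables (d : bool) (F G : C -> C) (w : C).
Hypothesis (HF : EDc d F w) (HG : EDc d G w).

Lemma EDc_plus : EDc d (fun x => F x + G x)%C w.
Proof. destruct HF, HG. split.
  - apply (ED_fext _ _ (fun x => Re (F x) + Re (G x))); [reflexivity|]. apply ED_plus; auto.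
  - apply (ED_fext _ _ (fun x => Im (F x) + Im (G x))); [reflexivity|]. apply ED_plus; auto.
Qed.
Lemma DdC_plus : DdC d (fun x => F x + G x)%C w = (DdC d F w + DdC d G w)%C.
Proof. destruct HF, HG. unfold DdC.
  rewrite (Dd_fext _ _ (fun x => Re (F x) + Re (G x))) by reflexivity.
  rewrite (Dd_fext _ (fun w0 => Im _) (fun x => Im (F x) + Im (G x))) by reflexivity.
  rewrite !Dd_plus by auto. reflexivity.
Qed.
Lemma EDc_mult : EDc d (fun x => F x * G x)%C w.
Proof. destruct HF, HG. split.
  - apply (ED_fext _ _ (fun x => Re (F x) * Re (G x) + - (Im (F x) * Im (G x)))); [reflexivity|].
    apply ED_plus; [|apply ED_opp]; apply ED_mult; auto.
  - apply (ED_fext _ _ (fun x => Re (F x) * Im (G x) + Im (F x) * Re (G x))); [reflexivity|].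
    apply ED_plus; apply ED_mult; auto.
Qed.
Lemma DdC_mult : DdC d (fun x => F x * G x)%C w = (DdC d F w * G w + F w * DdC d G w)%C.
Proof. destruct HF as [H H0], HG as [H1 H2]. unfold DdC.
  rewrite (Dd_fext _ _ (fun x => Re (F x) * Re (G x) + - (Im (F x) * Im (G x)))) by reflexivity.
  rewrite (Dd_fext _ (fun w0 => Im _) (fun x => Re (F x) * Im (G x) + Im (F x) * Re (G x))) by reflexivity.
  rewrite (Dd_plus _ _ _ _ (ED_mult _ _ _ _ H H1) (ED_opp _ _ _ (ED_mult _ _ _ _ H0 H2))).
  rewrite (Dd_plus _ _ _ _ (ED_mult _ _ _ _ H H2) (ED_mult _ _ _ _ H0 H1)).
  rewrite Dd_opp, (Dd_mult _ _ _ _ H H1), (Dd_mult _ _ _ _ H0 H2), (Dd_mult _ _ _ _ H H2), (Dd_mult _ _ _ _ H0 H1).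
  apply injective_projections; unfold Cplus, Cmult, Re, Im; cbn [fst snd]; ring.
Qed.
Lemma EDc_opp : EDc d (fun x => - F x)%C w.
Proof. destruct HF as [H H0]. split.
  - apply (ED_fext _ _ (fun x => - Re (F x))); [reflexivity|]. exact (ED_opp _ _ _ H).
  - apply (ED_fext _ _ (fun x => - Im (F x))); [reflexivity|]. exact (ED_opp _ _ _ H0).
Qed.
Lemma DdC_opp : DdC d (fun x => - F x)%C w = (- DdC d F w)%C.
Proof. unfold DdC.
  rewrite (Dd_fext _ _ (fun x => - Re (F x))) by reflexivity.
  rewrite (Dd_fext _ (fun w0 => Im _) (fun x => - Im (F x))) by reflexivity.
  rewrite !Dd_opp. reflexivity.
Qed.

Lemma Re_inv (x : C) : Re (/ x)%C = Re x * / (Re x * Re x + Im x * Im x).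
Proof. destruct x as [a b]. unfold Cinv, Re, Im. cbn [fst snd]. unfold Rdiv. repeat f_equal; ring. Qed.
Lemma Im_inv (x : C) : Im (/ x)%C = - Im x * / (Re x * Re x + Im x * Im x).
Proof. destruct x as [a b]. unfold Cinv, Re, Im. cbn [fst snd]. unfold Rdiv. repeat f_equal; ring. Qed.

Hypothesis Hn : F w <> 0%C.
Lemma EDc_inv : EDc d (fun x => / F x)%C w.
Proof. destruct HF as [H H0].
  pose proof (ED_plus _ _ _ _ (ED_mult _ _ _ _ H H) (ED_mult _ _ _ _ H0 H0)) as HN.
  pose proof (ED_inv _ _ _ HN (Cnz_norm _ Hn)) as HI. split.
  - apply (ED_fext _ _ (fun x => Re (F x) * / (Re (F x) * Re (F x) + Im (F x) * Im (F x)))).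
    { intro x. apply Re_inv. }
    exact (ED_mult _ _ _ _ H HI).
  - apply (ED_fext _ _ (fun x => - Im (F x) * / (Re (F x) * Re (F x) + Im (F x) * Im (F x)))).
    { intro x. apply Im_inv. }
    exact (ED_mult _ _ _ _ (ED_opp _ _ _ H0) HI).
Qed.
Lemma DdC_inv0 : (DdC d (fun x => / F x)%C w * (F w * F w))%C = (- DdC d F w)%C.
Proof. destruct HF as [H H0].
  pose proof (ED_plus _ _ _ _ (ED_mult _ _ _ _ H H) (ED_mult _ _ _ _ H0 H0)) as HN.
  pose proof (Cnz_norm _ Hn) as Hnz.
  pose proof (ED_inv _ _ _ HN Hnz) as HI. unfold DdC.
  rewrite (Dd_fext _ _ (fun x => Re (F x) * / (Re (F x) * Re (F x) + Im (F x) * Im (F x)))).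
  2:{ intro x. apply Re_inv. }
  rewrite (Dd_fext _ (fun w0 => Im _) (fun x => - Im (F x) * / (Re (F x) * Re (F x) + Im (F x) * Im (F x)))).
  2:{ intro x. apply Im_inv. }
  rewrite (Dd_mult _ _ _ _ H HI), (Dd_mult _ _ _ _ (ED_opp _ _ _ H0) HI), Dd_opp.
  rewrite (Dd_inv _ _ _ HN Hnz).
  rewrite (Dd_plus _ _ _ _ (ED_mult _ _ _ _ H H) (ED_mult _ _ _ _ H0 H0)).
  rewrite (Dd_mult _ _ _ _ H H), (Dd_mult _ _ _ _ H0 H0).
  set (A := Dd d (fun w0 => Re (F w0)) w). set (B := Dd d (fun w0 => Im (F w0)) w).
  clearbody A B.
  revert Hnz. destruct (F w) as [a b]. unfold Re, Im. cbn [fst snd]. intro Hnz.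
  apply injective_projections; unfold Cplus, Cmult, Copp; cbn [fst snd]; field; exact Hnz.
Qed.
End Pt.

Definition EDc2 (F : C -> C) z := EDc true F z /\ EDc false F z.

Lemma DdC_const d (c : C) w : DdC d (fun _ => c) w = 0%C.
Proof. unfold DdC. rewrite !Dd_const. reflexivity. Qed.
Lemma EDc_const d (c : C) w : EDc d (fun _ => c) w.
Proof. split; apply ED_const. Qed.

Section Pt.
Variables (F G : C -> C) (z : C) (HF : EDc2 F z) (HG : EDc2 G z).
Lemma EDc2_plus : EDc2 (fun x => F x + G x)%C z.
Proof. destruct HF, HG; split; apply EDc_plus; assumption. Qed.
Lemma EDc2_mult : EDc2 (fun x => F x * G x)%C z.
Proof. destruct HF, HG; split; apply EDc_mult; assumption. Qed.
Lemma EDc2_opp : EDc2 (fun x => - F x)%C z.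
Proof. destruct HF; split; apply EDc_opp; assumption. Qed.
Lemma dzbar_plus : dzbar (fun x => F x + G x)%C z = (dzbar F z + dzbar G z)%C.
Proof. destruct HF, HG. rewrite !dzbar_DdC, !DdC_plus by assumption. ring. Qed.
Lemma dzbar_mult : dzbar (fun x => F x * G x)%C z = (dzbar F z * G z + F z * dzbar G z)%C.
Proof. destruct HF, HG. rewrite !dzbar_DdC, !DdC_mult by assumption. ring. Qed.
Lemma dzbar_opp : dzbar (fun x => - F x)%C z = (- dzbar F z)%C.
Proof. rewrite !dzbar_DdC, !DdC_opp. ring. Qed.
Hypothesis Hn : F z <> 0%C.
Lemma EDc2_inv : EDc2 (fun x => / F x)%C z.
Proof. destruct HF; split; apply EDc_inv; assumption. Qed.
Lemma dzbar_inv : dzbar (fun x => / F x)%C z = (- dzbar F z / (F z * F z))%C.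
Proof. destruct HF as [H1 H2].
  pose proof (DdC_inv0 true F z H1 Hn) as K1. pose proof (DdC_inv0 false F z H2 Hn) as K2.
  rewrite !dzbar_DdC.
  set (a := DdC true (fun x => / F x)%C z) in *. set (b := DdC false (fun x => / F x)%C z) in *.
  assert (E1 : DdC true F z = (- (a * (F z * F z)))%C) by (rewrite K1; ring).
  assert (E2 : DdC false F z = (- (b * (F z * F z)))%C) by (rewrite K2; ring).
  rewrite E1, E2. field. exact Hn.
Qed.
End Pt.

Lemma dzbar_const (c : C) z : dzbar (fun _ => c) z = 0%C.
Proof. rewrite dzbar_DdC, !DdC_const. ring. Qed.
Lemma EDc2_const (c : C) z : EDc2 (fun _ => c) z.
Proof. split; apply EDc_const. Qed.

Lemma dzR_comp f w : dzR f w = (/2 * du f w, - (/2 * dv f w)).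
Proof.
  unfold dzR, dz, duC, dvC, cplx.
  assert (E1 : du (fun w0 => Im (RtoC (f w0))) w = 0) by exact (Dd_const true 0 w).
  assert (E2 : dv (fun w0 => Im (RtoC (f w0))) w = 0) by exact (Dd_const false 0 w).
  rewrite E1, E2. change (du (fun w0 => Re (RtoC (f w0))) w) with (du f w).
  change (dv (fun w0 => Re (RtoC (f w0))) w) with (dv f w).
  generalize (du f w) (dv f w). intros a b.
  apply injective_projections; unfold Cmult, Cinv, Cminus, Cplus, Copp, Ci, RtoC; cbn [fst snd]; field.
Qed.

Lemma Re_dzR f w : Re (dzR f w) = /2 * du f w.
Proof. rewrite dzR_comp. reflexivity. Qed.
Lemma Im_dzR f w : Im (dzR f w) = - (/2 * dv f w).
Proof. rewrite dzR_comp. reflexivity. Qed.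

Lemma EDc2_dzR Om f w : C2_on Om f -> Om w -> EDc2 (dzR f) w.
Proof.
  intros H Hw.
  pose proof (proj1 (C1_iff _ _) (C2_D Om f true H) w Hw true) as [A1 _].
  pose proof (proj1 (C1_iff _ _) (C2_D Om f true H) w Hw false) as [A2 _].
  pose proof (proj1 (C1_iff _ _) (C2_D Om f false H) w Hw true) as [A3 _].
  pose proof (proj1 (C1_iff _ _) (C2_D Om f false H) w Hw false) as [A4 _].
  split; split.
  - apply (ED_fext _ _ (fun x => /2 * Dd true f x)); [intro; apply Re_dzR|].
    exact (ED_mult _ _ _ _ (ED_const _ _ _) A1).
  - apply (ED_fext _ _ (fun x => - (/2 * Dd false f x))); [intro; apply Im_dzR|].
    exact (ED_opp _ _ _ (ED_mult _ _ _ _ (ED_const _ _ _) A3)).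
  - apply (ED_fext _ _ (fun x => /2 * Dd true f x)); [intro; apply Re_dzR|].
    exact (ED_mult _ _ _ _ (ED_const _ _ _) A2).
  - apply (ED_fext _ _ (fun x => - (/2 * Dd false f x))); [intro; apply Im_dzR|].
    exact (ED_opp _ _ _ (ED_mult _ _ _ _ (ED_const _ _ _) A4)).
Qed.

Lemma EDc2_C2c Om F w : C2c_on Om F -> Om w -> EDc2 F w.
Proof.
  intros [H1 H2] Hw.
  pose proof (proj1 (C1_iff _ _) (C2_C1 Om _ H1) w Hw) as P1.
  pose proof (proj1 (C1_iff _ _) (C2_C1 Om _ H2) w Hw) as P2.
  split; split; [apply (P1 true)|apply (P2 true)|apply (P1 false)|apply (P2 false)].
Qed.

Lemma dzbar_ext Om F G z : open Om -> Om z -> (forall y, Om y -> F y = G y) -> dzbar F z = dzbar G z.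
Proof.
  intros HO Hz H. rewrite !dzbar_DdC. unfold DdC.
  rewrite (Dd_ext Om HO (fun w => Re (F w)) (fun w => Re (G w)) true z),
          (Dd_ext Om HO (fun w => Re (F w)) (fun w => Re (G w)) false z),
          (Dd_ext Om HO (fun w => Im (F w)) (fun w => Im (G w)) true z),
          (Dd_ext Om HO (fun w => Im (F w)) (fun w => Im (G w)) false z);
  try reflexivity; try assumption; intros y Hy; rewrite H; auto.
Qed.

Lemma path_const (h : R -> R) :
  (forall t, 0 <= t <= 1 -> exists del, 0 < del /\ forall s, 0 <= s <= 1 -> Rabs (s - t) < del -> h s = h t) ->
  h 1 = h 0.
Proof.
  intros Hl.
  set (E := fun x => 0 <= x <= 1 /\ forall s, 0 <= s <= x -> h s = h 0).
  assert (Hb : bound E) by (exists 1; intros x [Hx _]; lra).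
  assert (He : exists x, E x) by (exists 0; split; [lra|intros s Hs; replace s with 0 by lra; reflexivity]).
  destruct (completeness E Hb He) as [m [Hub Hlub]].
  assert (Hm0 : 0 <= m) by (apply Hub; destruct He as [x Hx]; unfold E; split; [lra|intros s Hs; replace s with 0 by lra; reflexivity]).
  assert (Hm1 : m <= 1) by (apply Hlub; intros x [Hx _]; lra).
  destruct (Hl m (conj Hm0 Hm1)) as [del [Hdel Hd]].
  assert (Hx : exists x, E x /\ m - del < x).
  { apply NNPP. intro N. assert (m <= m - del); [|lra].
    apply Hlub. intros x Ex. apply Rnot_lt_le. intro L. apply N. exists x; auto. }
  destruct Hx as [x [[Ex1 Ex2] Lx]].
  assert (Hxm : x <= m) by (apply Hub; split; auto).
  assert (Claim : forall s, 0 <= s <= m -> h s = h 0).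
  { intros s Hs. destruct (Rle_dec s x) as [Hsx|Hsx].
    - apply Ex2; lra.
    - rewrite (Hd s) by (try lra; split_Rabs; lra).
      rewrite <- (Hd x) by (try lra; split_Rabs; lra). apply Ex2; lra. }
  destruct (Req_dec m 1) as [Em|Nm].
  - subst m. apply Claim; lra.
  - exfalso. set (y := Rmin 1 (m + del / 2)).
    assert (Ey : E y).
    { unfold y; split. split; [apply Rmin_glb; lra|apply Rmin_l].
      intros s Hs. destruct (Rle_dec s m) as [Hsm|Hsm]. apply Claim; lra.
      pose proof (Rmin_r 1 (m + del/2)). pose proof (Rmin_l 1 (m + del/2)). unfold y in Hs.
      rewrite (Hd s) by (try lra; split_Rabs; lra). apply Claim; lra. }
    pose proof (Hub y Ey). unfold y in *. unfold Rmin in *. destruct (Rle_dec 1 (m + del / 2)); lra.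
Qed.

Lemma loc_const Om f z : open Om -> C1_on Om f -> (forall w, Om w -> du f w = 0 /\ dv f w = 0) -> Om z ->
  exists r : posreal, forall w, ball z r w -> f w = f z.
Proof.
  intros HO H H0 Hz. destruct (HO z Hz) as [r Hr]. exists r. intros w Hw.
  apply ballC in Hw. destruct z as [u v], w as [u' v']. cbn [fst snd] in Hw. destruct Hw as [Hw1 Hw2].
  change (Rabs (u' - u) < r) in Hw1. change (Rabs (v' - v) < r) in Hw2.
  destruct (mvt_line Om f true (u', v') u u' H) as (c & Hc & Eq1).
  { intros t Ht. apply Hr. apply ballC. cbn [fst snd lin]. pose proof (between_abs u u' t Ht). split; lra. }
  destruct (mvt_line Om f false (u, v) v v' H) as (c' & Hc' & Eq2).
  { intros t Ht. apply Hr. apply ballC. cbn [fst snd lin]. pose proof (between_abs v v' t Ht).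
    rewrite Rminus_diag, Rabs_R0. pose proof (cond_pos r). split; lra. }
  cbn [lin fst snd] in Eq1, Eq2.
  assert (Z1 : Dd true f (c, v') = 0).
  { apply (H0 (c, v')). apply Hr. apply ballC. cbn [fst snd]. pose proof (between_abs u u' c Hc). split; lra. }
  assert (Z2 : Dd false f (u, c') = 0).
  { apply (H0 (u, c')). apply Hr. apply ballC. cbn [fst snd]. pose proof (between_abs v v' c' Hc').
    rewrite Rminus_diag, Rabs_R0. pose proof (cond_pos r). split; lra. }
  rewrite Z1 in Eq1. rewrite Z2 in Eq2. lra.
Qed.

Lemma const_on Om f : open Om -> path_connected Om -> C1_on Om f ->
  (forall w, Om w -> du f w = 0 /\ dv f w = 0) -> forall a b, Om a -> Om b -> f b = f a.
Proof.
  intros HO Hp H H0 a b Ha Hb. destruct (Hp a b Ha Hb) as [gam [Hg [G0 G1]]].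
  rewrite <- G0, <- G1. apply (path_const (fun t => f (gam t))).
  intros t Ht. destruct (Hg t Ht) as [Hc Hin].
  destruct (loc_const Om f (gam t) HO H H0 Hin) as [r Hr].
  destruct (proj1 (filterlim_locally _ _) Hc r) as [del Hdel].
  exists del. split; [apply cond_pos|]. intros s Hs Hst. apply Hr. apply Hdel. exact Hst.
Qed.

Lemma RtoC2 : RtoC 2 <> 0%C.
Proof. intro E. apply (f_equal fst) in E. simpl in E. lra. Qed.

Lemma Ci2 : (Ci ^ 2 = - RtoC 1)%C. Proof. apply injective_projections; simpl; ring. Qed.
Lemma Ci3 : (Ci ^ 3 = - Ci)%C. Proof. apply injective_projections; simpl; ring. Qed.
Lemma Ci4 : (Ci ^ 4 = RtoC 1)%C. Proof. apply injective_projections; simpl; ring. Qed.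

Ltac nz := repeat split; cbv beta; try assumption; match goal with H : ?Y <> _ |- ?X <> _ =>
   let HH := fresh in intro HH; apply H; transitivity X; [ring|exact HH] end.
Ltac cfield := field_simplify; try nz; rewrite ?Ci2, ?Ci3, ?Ci4; field; try nz.

Lemma alg_Y lam (g p q : C) i : g <> 0%C -> (1 + Ci * RtoC lam * g)%C <> 0%C -> (i < 4)%nat ->
  (p * wP (g / (1 + Ci * RtoC lam * g)) i +
   ((/ g + Ci * RtoC lam) * (g * q - Ci * RtoC lam * p)) * wQ (g / (1 + Ci * RtoC lam * g)) i)%C =
  (RtoC (Lmat lam i 0) * (p * wP g 0 + q * wQ g 0) + RtoC (Lmat lam i 1) * (p * wP g 1 + q * wQ g 1) +
   RtoC (Lmat lam i 2) * (p * wP g 2 + q * wQ g 2) + RtoC (Lmat lam i 3) * (p * wP g 3 + q * wQ g 3))%C.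
Proof.
  intros Hg Hh Hi. pose proof RtoC2 as H2.
  destruct i as [|[|[|[|i]]]]; [| | | |lia]; unfold Lmat, wP, wQ;
  rewrite ?RtoC_minus, ?RtoC_plus, ?RtoC_opp;
  unfold Rdiv; rewrite ?RtoC_mult, ?RtoC_pow, ?(RtoC_inv 2) by lra;
  try replace (RtoC (-1)) with (- RtoC 1)%C by (apply injective_projections; simpl; ring);
  cfield.
Qed.

Lemma conj_RtoC r : Cconj (RtoC r) = RtoC r.
Proof. apply injective_projections; simpl; ring. Qed.
Lemma conj_Ci : Cconj Ci = (- Ci)%C.
Proof. apply injective_projections; simpl; ring. Qed.
Lemma conj_h (lam : R) (g : C) : Cconj (1 + Ci * RtoC lam * g)%C = (RtoC 1 + - Ci * RtoC lam * Cconj g)%C.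
Proof. rewrite Cplus_conj, !Cmult_conj, conj_Ci, !conj_RtoC. reflexivity. Qed.

Lemma cmod2_gl (lam : R) (g : C) : g <> 0%C -> (1 + Ci * RtoC lam * g)%C <> 0%C ->
  RtoC (Cmod (g / (1 + Ci * RtoC lam * g)) ^ 2) =
  ((g / (1 + Ci * RtoC lam * g)) * (Cconj g / (RtoC 1 + - Ci * RtoC lam * Cconj g)))%C /\
  (RtoC 1 + - Ci * RtoC lam * Cconj g)%C <> 0%C.
Proof.
  intros Hg Hh. split.
  - rewrite Cmod2_conj, Cdiv_conj by exact Hh. rewrite conj_h. reflexivity.
  - rewrite <- conj_h. intro E. apply Hh. rewrite <- (Cconj_conj (1 + Ci * RtoC lam * g)%C), E.
    apply injective_projections; simpl; ring.
Qed.

Lemma alg_zzb lam (g QQ PP : C) : g <> 0%C -> (1 + Ci * RtoC lam * g)%C <> 0%C ->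
  PP = (RtoC (Cmod g ^ 2) * QQ)%C ->
  PP = (RtoC (Cmod (g / (1 + Ci * RtoC lam * g)) ^ 2) *
        ((/ g + Ci * RtoC lam) * (g * QQ - Ci * RtoC lam * PP)))%C.
Proof.
  intros Hg Hh E. destruct (cmod2_gl lam g Hg Hh) as [M Hh']. rewrite M. rewrite E.
  rewrite Cmod2_conj. revert Hh'. generalize (Cconj g). intros c Hh'. field_simplify; try nz; rewrite ?Ci2, ?Ci3, ?Ci4; cfield.
Qed.

Lemma alg_nd lam (g p q : C) : g <> 0%C -> (1 + Ci * RtoC lam * g)%C <> 0%C ->
  (p - RtoC (Cmod g ^ 2) * q)%C <> 0%C ->
  (p - RtoC (Cmod (g / (1 + Ci * RtoC lam * g)) ^ 2) *
        ((/ g + Ci * RtoC lam) * (g * q - Ci * RtoC lam * p)))%C <> 0%C.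
Proof.
  intros Hg Hh Hn E. apply Hn. destruct (cmod2_gl lam g Hg Hh) as [M Hh']. rewrite M in E.
  rewrite Cmod2_conj. revert Hh' E. generalize (Cconj g). intros c Hh' E.
  transitivity ((RtoC 1 + - Ci * RtoC lam * c) *
     (p - g / (1 + Ci * RtoC lam * g) * (c / (RtoC 1 + - Ci * RtoC lam * c)) *
        ((/ g + Ci * RtoC lam) * (g * q - Ci * RtoC lam * p))))%C.
  - cfield.
  - rewrite E. ring.
Qed.

Lemma isom lam : forall i j, (i < 4)%nat -> (j < 4)%nat ->
     sum_f_R0 (fun k => sum_f_R0 (fun l =>
        Lmat lam k i * eta k l * Lmat lam l j) 3) 3 = eta i j.
Proof.
  intros i j Hi Hj.
  do 4 (destruct i as [|i]; [ do 4 (destruct j as [|j]; [unfold eta; simpl; field|]); lia |]); lia.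
Qed.

Lemma ED_scal d f (a : R) w : ED d f w -> ED d (fun x => a * f x) w.
Proof. unfold ED; intros; apply (ex_derive_scal (fun t => f (lin d w t))); assumption. Qed.
Lemma Dd_scal d f (a : R) w : Dd d (fun x => a * f x) w = a * Dd d f w.
Proof. unfold Dd; apply (Derive_scal (fun t => f (lin d w t))). Qed.

Lemma Re_plusC (x y : C) : Re (x + y)%C = Re x + Re y.
Proof. reflexivity. Qed.
Lemma Im_plusC (x y : C) : Im (x + y)%C = Im x + Im y.
Proof. reflexivity. Qed.
Lemma Re_scalC (r : R) (x : C) : Re (RtoC r * x)%C = r * Re x.
Proof. destruct x; unfold Re, RtoC, Cmult; cbn [fst snd]; ring. Qed.
Lemma Im_scalC (r : R) (x : C) : Im (RtoC r * x)%C = r * Im x.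
Proof. destruct x; unfold Im, RtoC, Cmult; cbn [fst snd]; ring. Qed.
Lemma Re_dzR' f w : Re (dzR f w) = /2 * Dd true f w.
Proof. apply Re_dzR. Qed.
Lemma Im_dzR' f w : Im (dzR f w) = - (/2 * Dd false f w).
Proof. apply Im_dzR. Qed.

Lemma dzbar_minus (F G : C -> C) z : EDc2 F z -> EDc2 G z ->
  dzbar (fun x => F x - G x)%C z = (dzbar F z - dzbar G z)%C.
Proof.
  intros HF HG.
  pose proof (dzbar_plus F (fun x => - G x)%C z HF (EDc2_opp G z HG)) as E. cbv beta in E.
  change (dzbar (fun x => F x + - G x)%C z = (dzbar F z - dzbar G z)%C). rewrite E.
  rewrite (dzbar_opp G z). reflexivity.
Qed.

Theorem mainTheorem8
  (Om : C -> Prop) (g : C -> C) (P Q : C -> R) (lam : R) (Qlam : C -> R)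
  (X Y : nat -> C -> R) :
  simply_connected_domain Om ->
  WData1 Om g P Q ->
  (forall z, Om z -> (1 + Ci * RtoC lam * g z)%C <> 0%C) ->
  C2_on Om Qlam ->
  (forall z, Om z ->
     dzR Qlam z = ((/ g z + Ci * RtoC lam) *
                   (g z * dzR Q z - Ci * RtoC lam * dzR P z))%C) ->
  IsXmap Om g P Q X ->
  IsXmap Om (fun w => (g w / (1 + Ci * RtoC lam * g w))%C) P Qlam Y ->
  WData1 Om (fun w => (g w / (1 + Ci * RtoC lam * g w))%C) P Qlam /\
  (exists c : nat -> R, forall z i, Om z -> (i < 4)%nat ->
     Y i z = applyL lam X i z + c i) /\
  (forall i j, (i < 4)%nat -> (j < 4)%nat ->
     sum_f_R0 (fun k => sum_f_R0 (fun l =>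
        Lmat lam k i * eta k l * Lmat lam l j) 3) 3 = eta i j).
Proof.
  intros [HO [[z0 Hz0] [Hpc _]]] [Hg [HP [HQ [Hg0 [Hgh [Hzz Hnd]]]]]] Hh HQl HQlz [HXc HXz] [HYc HYz].
  assert (EDg : forall w, Om w -> EDc2 g w) by (intros; eapply EDc2_C2c; eauto).
  assert (EDh : forall w, Om w -> EDc2 (fun x => 1 + Ci * RtoC lam * g x)%C w).
  { intros w Hw. exact (EDc2_plus (fun _ => 1%C) (fun x => Ci * RtoC lam * g x)%C w (EDc2_const _ _)
      (EDc2_mult (fun _ => Ci * RtoC lam)%C g w (EDc2_const _ _) (EDg w Hw))). }
  assert (Dh : forall w, Om w -> dzbar (fun x => 1 + Ci * RtoC lam * g x)%C w = 0%C).
  { intros w Hw.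
    pose proof (dzbar_plus (fun _ => 1%C) (fun x => Ci * RtoC lam * g x)%C w (EDc2_const _ _)
      (EDc2_mult (fun _ => Ci * RtoC lam)%C g w (EDc2_const _ _) (EDg w Hw))) as E. cbv beta in E.
    rewrite E, dzbar_const.
    pose proof (dzbar_mult (fun _ => Ci * RtoC lam)%C g w (EDc2_const _ _) (EDg w Hw)) as E2. cbv beta in E2.
    rewrite E2, dzbar_const, Hgh by exact Hw. ring. }
  split.
  { split; [|split; [|split; [|split; [|split; [|split]]]]].
    - unfold Cdiv. apply (C2c_mult Om HO g (fun w => / (1 + Ci * RtoC lam * g w))%C Hg).
      apply (C2c_inv Om HO (fun w => 1 + Ci * RtoC lam * g w)%C); [|exact Hh].
      apply (C2c_plus Om HO (fun _ => 1%C) (fun x => Ci * RtoC lam * g x)%C); [apply (C2c_const Om HO)|].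
      apply (C2c_mult Om HO (fun _ => Ci * RtoC lam)%C g); [apply (C2c_const Om HO)|exact Hg].
    - exact HP.
    - exact HQl.
    - intros w Hw E. apply (Hg0 w Hw). pose proof (Hh w Hw) as H1.
      transitivity ((g w / (1 + Ci * RtoC lam * g w)) * (1 + Ci * RtoC lam * g w))%C.
      + field. exact H1.
      + rewrite E. ring.
    - intros w Hw. unfold Cdiv.
      pose proof (dzbar_mult g (fun x => / (1 + Ci * RtoC lam * g x))%C w (EDg w Hw)
        (EDc2_inv _ w (EDh w Hw) (Hh w Hw))) as E. cbv beta in E. rewrite E.
      pose proof (dzbar_inv _ w (EDh w Hw) (Hh w Hw)) as E2. cbv beta in E2. rewrite E2.
      rewrite Dh, Hgh by exact Hw. field. exact (Hh w Hw).
    - intros w Hw. cbv beta.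
      change (dzzbarR Qlam w) with (dzbar (dzR Qlam) w).
      rewrite (dzbar_ext Om (dzR Qlam) (fun y : C => ((/ g y + Ci * RtoC lam) *
                   (g y * dzR Q y - Ci * RtoC lam * dzR P y))%C) w HO Hw HQlz).
      assert (EDA : EDc2 (fun y => / g y + Ci * RtoC lam)%C w).
      { exact (EDc2_plus (fun y => / g y)%C (fun _ => Ci * RtoC lam)%C w (EDc2_inv g w (EDg w Hw) (Hg0 w Hw)) (EDc2_const _ _)). }
      assert (EDQ := EDc2_dzR Om Q w HQ Hw). assert (EDP := EDc2_dzR Om P w HP Hw).
      assert (EDB1 : EDc2 (fun y => g y * dzR Q y)%C w) by exact (EDc2_mult g (dzR Q) w (EDg w Hw) EDQ).
      assert (EDB2 : EDc2 (fun y => Ci * RtoC lam * dzR P y)%C w) by exact (EDc2_mult (fun _ => Ci * RtoC lam)%C (dzR P) w (EDc2_const _ _) EDP).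
      assert (EDB : EDc2 (fun y => g y * dzR Q y - Ci * RtoC lam * dzR P y)%C w).
      { exact (EDc2_plus _ _ w EDB1 (EDc2_opp _ w EDB2)). }
      pose proof (dzbar_mult _ _ w EDA EDB) as E. cbv beta in E. rewrite E. clear E.
      assert (DA : dzbar (fun y => / g y + Ci * RtoC lam)%C w = 0%C).
      { pose proof (dzbar_plus (fun y => / g y)%C (fun _ => Ci * RtoC lam)%C w (EDc2_inv g w (EDg w Hw) (Hg0 w Hw)) (EDc2_const _ _)) as E. cbv beta in E. rewrite E.
        rewrite (dzbar_inv g w (EDg w Hw) (Hg0 w Hw)), dzbar_const, Hgh by exact Hw. field. exact (Hg0 w Hw). }
      assert (DB : dzbar (fun y => g y * dzR Q y - Ci * RtoC lam * dzR P y)%C w = (g w * dzzbarR Q w - Ci * RtoC lam * dzzbarR P w)%C).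
      { pose proof (dzbar_minus _ _ w EDB1 EDB2) as E. cbv beta in E. rewrite E.
        pose proof (dzbar_mult g (dzR Q) w (EDg w Hw) EDQ) as E1. cbv beta in E1. rewrite E1.
        pose proof (dzbar_mult (fun _ => Ci * RtoC lam)%C (dzR P) w (EDc2_const _ _) EDP) as E2. cbv beta in E2. rewrite E2.
        rewrite dzbar_const, Hgh by exact Hw. unfold dzzbarR. ring. }
      rewrite DA, DB.
      etransitivity; [apply (alg_zzb lam (g w) (dzzbarR Q w) (dzzbarR P w)); auto|].
      f_equal. ring.
    - intros w Hw. cbv beta. rewrite HQlz by exact Hw. apply alg_nd; auto.
  }
  split.
  - assert (Lin : forall i w, (i < 4)%nat -> Om w -> forall d,
       Dd d (fun x => Y i x + - applyL lam X i x) w =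
       Dd d (Y i) w - (Lmat lam i 0 * Dd d (X 0%nat) w + Lmat lam i 1 * Dd d (X 1%nat) w +
                       Lmat lam i 2 * Dd d (X 2%nat) w + Lmat lam i 3 * Dd d (X 3%nat) w)).
    { intros i w Hi Hw d.
      assert (EX : forall j, (j < 4)%nat -> ED d (X j) w).
      { intros j Hj. exact (proj1 (proj1 (C1_iff _ _) (HXc j Hj) w Hw d)). }
      assert (EY : ED d (Y i) w) by exact (proj1 (proj1 (C1_iff _ _) (HYc i Hi) w Hw d)).
      rewrite (Dd_fext d _ (fun x => Y i x + - (Lmat lam i 0 * X 0%nat x + Lmat lam i 1 * X 1%nat x +
                       Lmat lam i 2 * X 2%nat x + Lmat lam i 3 * X 3%nat x))) by reflexivity.
      pose proof (ED_scal d (X 0%nat) (Lmat lam i 0) w (EX 0%nat ltac:(lia))) as S0.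
      pose proof (ED_scal d (X 1%nat) (Lmat lam i 1) w (EX 1%nat ltac:(lia))) as S1.
      pose proof (ED_scal d (X 2%nat) (Lmat lam i 2) w (EX 2%nat ltac:(lia))) as S2.
      pose proof (ED_scal d (X 3%nat) (Lmat lam i 3) w (EX 3%nat ltac:(lia))) as S3.
      pose proof (ED_plus _ _ _ _ S0 S1) as S01. pose proof (ED_plus _ _ _ _ S01 S2) as S012.
      pose proof (ED_plus _ _ _ _ S012 S3) as S0123.
      rewrite (Dd_plus _ _ _ _ EY (ED_opp _ _ _ S0123)), Dd_opp.
      rewrite (Dd_plus _ _ _ _ S012 S3), (Dd_plus _ _ _ _ S01 S2), (Dd_plus _ _ _ _ S0 S1).
      rewrite !Dd_scal. ring. }
    assert (Zero : forall i w, (i < 4)%nat -> Om w ->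
       du (fun x => Y i x + - applyL lam X i x) w = 0 /\ dv (fun x => Y i x + - applyL lam X i x) w = 0).
    { intros i w Hi Hw.
      assert (EQ : dzR (Y i) w = (RtoC (Lmat lam i 0) * dzR (X 0%nat) w + RtoC (Lmat lam i 1) * dzR (X 1%nat) w +
          RtoC (Lmat lam i 2) * dzR (X 2%nat) w + RtoC (Lmat lam i 3) * dzR (X 3%nat) w)%C).
      { rewrite (HYz w i Hw Hi). cbv beta. rewrite (HQlz w Hw). rewrite alg_Y by auto.
        rewrite !HXz by (auto; lia). reflexivity. }
      change (du ?f w) with (Dd true f w). change (dv ?f w) with (Dd false f w).
      rewrite !Lin by auto. split.
      - apply (f_equal Re) in EQ. rewrite !Re_plusC, !Re_scalC, !Re_dzR' in EQ. lra.
      - apply (f_equal Im) in EQ. rewrite !Im_plusC, !Im_scalC, !Im_dzR' in EQ. lra. }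
    assert (C1F : forall i, (i < 4)%nat -> C1_on Om (fun x => Y i x + - applyL lam X i x)).
    { intros i Hi. apply (C1_ext Om HO _ (fun x => Y i x + - (Lmat lam i 0 * X 0%nat x + Lmat lam i 1 * X 1%nat x +
                       Lmat lam i 2 * X 2%nat x + Lmat lam i 3 * X 3%nat x))); [intros; reflexivity|].
      assert (M : forall j, (j < 4)%nat -> C1_on Om (fun x => Lmat lam i j * X j x)).
      { intros j Hj. exact (C1_mult Om HO (fun _ => Lmat lam i j) (X j) (C1_const Om _) (HXc j Hj)). }
      exact (C1_plus Om HO (Y i) _ (HYc i Hi) (C1_opp Om HO _
        (C1_plus Om HO _ _ (C1_plus Om HO _ _ (C1_plus Om HO _ _ (M 0%nat ltac:(lia)) (M 1%nat ltac:(lia)))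
           (M 2%nat ltac:(lia))) (M 3%nat ltac:(lia))))). }
    exists (fun i => Y i z0 - applyL lam X i z0). intros z i Hz Hi.
    pose proof (const_on Om _ HO Hpc (C1F i Hi) (fun w Hw => Zero i w Hi Hw) z0 z Hz0 Hz) as K.
    cbv beta in K. lra.
  - exact (isom lam).
Qed.
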